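(* Let $X$ be a real Banach space, let $K\subset X$ be compact, let $\lambda_1,\dots,\lambda_m\in X^*$ with $\|\lambda_j\|_{X^*}=1$, and let $w\in\mathbb{R}^m$. Then $$\lim_{\varepsilon\to 0^+} R(K(w,\varepsilon))_X=R(K_w)_X .$$
   Context: For $g\in X$ write $\lambda(g):=(\lambda_1(g),\dots,\lambda_m(g))\in\mathbb{R}^m$. On $\mathbb{R}^m$ use the norm $\|v\|:=\big[\frac1m\sum_{j=1}^m|v_j|^2\big]^{1/2}$. For $w\in\mathbb{R}^m$, $K_w:=\{f\in K:\ \lambda(f)=w\}$, and for $\varepsilon>0$, $K(w,\varepsilon):=\bigcup_{w'\in\mathbb{R}^m:\ \|w'-w\|\le\varepsilon}K_{w'}$. For a set $S\subset X$, the Chebyshev radius is $R(S)_X:=\inf\{r:\ S\subset B(z,r)_X \text{ for some } z\in X\}$, where $B(z,r)_X$ is the closed ball in $X$ of center $z$ and radius $r$. *)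

(* Defs.v *)
From HB Require Import structures.
From mathcomp Require Import all_boot all_order all_algebra.
From mathcomp Require Import all_classical all_reals all_analysis.
Set Implicit Arguments. Unset Strict Implicit. Unset Printing Implicit Defensive.
Import Order.TTheory GRing.Theory Num.Theory.
Import numFieldNormedType.Exports.
Local Open Scope classical_set_scope.
Local Open Scope ring_scope.

Definition dual_norm {R : realType} {X : normedModType R} (f : X -> R) : R :=
  sup [set `|f x| | x in [set x : X | `|x| <= 1]].

Definition cball {R : realType} {X : normedModType R} (z : X) (r : R) : set X :=
  [set y | `|z - y| <= r].

(* Chebyshev radius, in the extended reals (= -oo for the empty set) *)
Definition cheb_radius {R : realType} {X : normedModType R} (S : set X) : \bar R :=
  ereal_inf [set r%:E | r in [set r : R | exists z : X, S `<=` cball z r]].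

Definition mnorm {R : realType} {m : nat} (v : 'I_m -> R) : R :=
  Num.sqrt ((m%:R)^-1 * \sum_(j < m) `|v j| ^+ 2).

Definition lam {R : realType} {X : normedModType R} {m : nat}
  (l : 'I_m -> X -> R) (g : X) : 'I_m -> R := fun j => l j g.

Definition Kfib {R : realType} {X : normedModType R} {m : nat}
  (l : 'I_m -> X -> R) (K : set X) (w : 'I_m -> R) : set X :=
  [set f | K f /\ lam l f = w].

Definition Kthick {R : realType} {X : normedModType R} {m : nat}
  (l : 'I_m -> X -> R) (K : set X) (w : 'I_m -> R) (eps : R) : set X :=
  \bigcup_(w' in [set w' : 'I_m -> R | mnorm (fun j => w' j - w j) <= eps])
    Kfib l K w'.

(* Main.v *)
Require Import Defs.
From HB Require Import structures.
From mathcomp Require Import all_boot all_order all_algebra.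
From mathcomp Require Import all_classical all_reals all_analysis.
From mathcomp Require Import lra.
Import Order.TTheory GRing.Theory Num.Theory.
Import numFieldNormedType.Exports.
Local Open Scope classical_set_scope.
Local Open Scope ring_scope.
Lemma mnorm_le (R : realType) (m : nat) (v : 'I_m -> R) (e : R) :
  0 <= e -> mnorm v <= e -> \sum_(j < m) (v j * v j) <= m%:R * (e * e).
Proof.
move=> e0; case: m v => [|m] v.
  by rewrite big_ord0 mul0r.
rewrite /mnorm => H.
have He : e = Num.sqrt (e ^+ 2) by rewrite sqrtr_sqr ger0_norm.
rewrite He ler_sqrt ?sqr_ge0 // in H.
have := ler_wpM2l (ler0n _ m.+1) H.
move=> H2; rewrite mulrA mulfV ?pnatr_eq0 // mul1r in H2.
apply: le_trans H2; rewrite le_eqVlt; apply/orP; left; apply/eqP.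
by apply: eq_bigr => j _; rewrite real_normK ?num_real // expr2.
Qed.

Lemma core (R : realType) (X : normedModType R) m (K : set X)
  (l : 'I_m -> X -> R) (w : 'I_m -> R) (z : X) (r0 r : R) :
  compact K -> (forall j, continuous (l j)) -> Kfib l K w `<=` cball z r0 ->
  r0 < r -> \forall e \near 0^'+, Kthick l K w e `<=` cball z r.
Proof.
move=> cK lc sub r0r.
pose h := fun f : X => \sum_(j < m) ((l j f - w j) * (l j f - w j)).
have hc : continuous h.
  move=> f; rewrite /h; apply: (cvg_big (P := xpredT) add_continuous) => j _.
  by apply: cvgM; (apply: cvgB; [exact: lc| exact: cvg_cst]).
pose C := K `&` [set f | r <= `|z - f|].
have cC : compact C.
  apply: compact_closedI cK _.
  have : continuous (fun f : X => `|z - f|).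
    by move=> f; apply: cvg_norm; apply: cvgB; [exact: cvg_cst | exact: cvg_id].
  by move/continuous_closedP => /(_ _ (@closed_ge _ r)).
have chC : compact (h @` C) := continuous_compact (continuous_subspaceT hc) cC.
have clC : closed (h @` C) := compact_closed (@Rhausdorff _) chC.
have n0 : ~ (h @` C) 0.
  case=> f [Kf rf] hf0.
  have lw : lam l f = w.
    apply/funext => j; rewrite /lam.
    have nn : forall i : 'I_m, true -> 0 <= (l i f - w i) * (l i f - w i).
      by move=> i _; rewrite -expr2 sqr_ge0.
    have /eqP := psumr_eq0P nn hf0 (i:=j) isT.
    by rewrite mulf_eq0 orbb subr_eq0 => /eqP.
  have := sub f (conj Kf lw); rewrite /cball /= => H.
  by move: rf; rewrite /= leNgt (le_lt_trans H r0r).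
have := closed_openC clC; rewrite openE => /(_ 0 n0) /nbhs_ballP [d d0 bd].
have hC : forall f, C f -> d <= h f.
  move=> f Cf; rewrite leNgt; apply/negP => hfd.
  apply: (bd (h f)); last by exists f.
  rewrite -ball_normE /= sub0r normrN ger0_norm //.
  by apply: sumr_ge0 => i _; rewrite -expr2 sqr_ge0.
near=> e.
have e0 : 0 < e by near: e; exact: nbhs_right_gt.
have e1 : e < 1 by near: e; exact: nbhs_right_lt.
have e2 : e < d / (m%:R + 1) by near: e; apply: nbhs_right_lt; rewrite divr_gt0 // ltr_wpDl.
rewrite ltr_pdivlMr ?ltr_wpDl // in e2.
move=> f [w' /= Hw' [Kf lamf]].
rewrite /cball /= leNgt; apply/negP => rlt.
have := hC f (conj Kf (ltW rlt)).
have : h f <= m%:R * (e * e).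
  apply: mnorm_le; first exact: ltW.
  by rewrite -lamf in Hw'.
have m0 : 0 <= m%:R :> R := ler0n _ m.
have me : 0 <= m%:R * e by rewrite mulr_ge0 // ltW.
move=> H1 H2; nra.
Unshelve. all: by end_near. Qed.

Theorem lemma2p1 (R : realType) (X : completeNormedModType R) (m : nat)
  (K : set X) (l : 'I_m -> {linear X -> R^o}) (w : 'I_m -> R) :
  compact K ->
  (forall j, continuous (l j : X -> R)) ->
  (forall j, dual_norm (l j : X -> R) = 1) ->
  cheb_radius (Kthick (fun j => (l j : X -> R)) K w e) @[e --> 0^'+] -->
  cheb_radius (Kfib (fun j => (l j : X -> R)) K w).
Proof.
move=> cK lc _.
set l' := (fun j => (l j : X -> R)).
set F := fun e => cheb_radius (Kthick l' K w e).
change (F e @[e --> 0^'+] --> cheb_radius (Kfib l' K w)).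
set L := cheb_radius (Kfib l' K w).
have lb : \forall e \near 0^'+, (L <= F e)%E.
  near=> e.
  have e0 : 0 < e by near: e; exact: nbhs_right_gt.
  apply: le_ereal_inf; apply: image_subset => r [z sub]; exists z.
  apply: subset_trans sub => f Kf; exists w => //=.
  rewrite /mnorm; under eq_bigr do rewrite subrr normr0 expr0n.
  by rewrite big1 // mulr0 sqrtr0 ltW.
have ub : forall x : R, (L < x%:E)%E -> \forall e \near 0^'+, (F e <= x%:E)%E.
  move=> x /ereal_inf_lt [_ [r0 [z sub] <-]]; rewrite lte_fin => r0x.
  have := @core _ _ _ _ _ _ _ _ _ cK lc sub r0x; apply: filterS => e sube.
  by apply: ereal_inf_lbound; exists x => //; exists z.
case hL : L lb ub => [r| |] lb ub.
- apply/fine_cvgP; split.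
    near=> e.
    have h1 : (r%:E <= F e)%E by near: e; exact: lb.
    have h2 : (F e <= (r + 1)%:E)%E by near: e; apply: ub; rewrite lte_fin ltrDl.
    by move: h1 h2; case: (F e).
  apply/cvgrPdist_le => eps eps0.
  near=> e.
  have h1 : (r%:E <= F e)%E by near: e; exact: lb.
  have h2 : (F e <= (r + eps)%:E)%E by near: e; apply: ub; rewrite lte_fin ltrDl.
  case hF : (F e) h1 h2 => [s||] //=; rewrite !lee_fin => h1 h2.
  rewrite /comp /= hF /= ler_norml; apply/andP; split; lra.
- apply: (@gee_cvgy _ _ _ _ (fun=> +oo%E)); last exact: cvg_cst.
  exact: lb.
- apply/cvgeNyPle => A; apply: ub; exact: ltNyr.
Unshelve. all: by end_near. Qed.
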